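(* Let $d\ge0$, $n\ge d+1$. There is a Zariski-open dense subset $U\subset\mathbb{R}^n\times\mathbb{R}^{n-d}$ such that the restriction of the higher Prony map $\Phi_{d,n}$ to $U\cap\{x_1<\cdots<x_n,\ \alpha_i\ne0\ \forall i\}$ is injective. Moreover, for $(x,\alpha)$ in this set and $M=\Phi_{d,n}(x,\alpha)$: the Hankel matrix $H_M$ has one-dimensional kernel; the roots of its kernel polynomial $p_M$ are $x_1,\dots,x_n$; and $\alpha$ is the unique solution of the square linear system $A_{d,n}(\mathcal{X})\alpha=b(M)$, where $b(M)=(\binom{r+d}{d}m_r)_{0\le r\le n-d-1}$. Furthermore, $\sum_i\alpha_i\mu_{(x_i,\dots,x_{i+d})}$ lies in the positive simplicial spline cone iff $A_{d,n}(\mathcal{X})^{-1}b(M)$ has nonnegative coordinates.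
   Context: $\mu_V$ for a list $V=(v_1,\dots,v_{d+1})$ is the law of $\sum_k\lambda_kv_k$ with $\lambda$ uniform on the standard simplex $\{\lambda\in\mathbb{R}^{d+1}_{\ge0}:\sum\lambda_k=1\}$. The positive simplicial spline cone for $\mathcal{X}=\{x_1,\dots,x_n\}$ is $\{\sum_i\beta_i\mu_{(x_i,\dots,x_{i+d})}:\beta_i\ge0\}$. The higher Prony map $\Phi_{d,n}:\mathbb{R}^n\times\mathbb{R}^{n-d}\to\mathbb{R}^{2n-d}$ sends $(x;\alpha)$ to $M=(m_0,\dots,m_{2n-d-1})$ with $m_j=\binom{j+d}{d}^{-1}\sum_{i=1}^{n-d}\alpha_ih_j(x_i,\dots,x_{i+d})$, $h_j$ the complete homogeneous symmetric polynomial. Normalized sequence: $c_0=\cdots=c_{d-1}=0$, $c_{d+i}=\binom{i+d}{d}m_i$. $H_M=(c_{i+j})_{0\le i\le n-1,\,0\le j\le n}$; the kernel polynomial is $p_M(t)=\sum_{k=0}^nu_kt^k$ for $(u_0,\dots,u_n)$ spanning $\ker H_M$. $A_{d,n}(\mathcal{X})=(h_r(x_i,\dots,x_{i+d}))_{0\le r\le n-d-1,\,1\le i\le n-d}$. *)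

(* Defs.v *)
From HB Require Import structures.
From mathcomp Require Import all_boot all_order all_algebra.
From mathcomp Require Import all_classical all_reals all_analysis.
From mathcomp Require mpoly.

Set Implicit Arguments.
Unset Strict Implicit.
Unset Printing Implicit Defensive.

Import Order.TTheory GRing.Theory Num.Theory.
Local Open Scope classical_set_scope.
Local Open Scope ring_scope.

Section HigherProny.
Variable R : realType.

Definition zariski_closed (N : nat) (Z : set ('I_N -> R)) : Prop :=
  exists (k : nat) (f : 'I_k -> mpoly.mpoly N R),
    Z = [set v | forall i, mpoly.meval v (f i) = 0].

Definition zariski_open (N : nat) (U : set ('I_N -> R)) : Prop :=
  zariski_closed (~` U).

Definition zariski_dense (N : nat) (U : set ('I_N -> R)) : Prop :=
  forall Z, zariski_closed Z -> U `<=` Z -> Z = setT.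

Definition coord (N : nat) (p : 'I_N -> R) (k : nat) : R :=
  if insub k is Some i then p i else 0.

(* x_{k+1} = xs p k  (0 <= k < n),  alpha_{i+1} = als p i  (0 <= i < n-d) *)
Definition xs (n d : nat) (p : 'I_(n + (n - d)) -> R) (k : nat) : R := coord p k.
Definition als (n d : nat) (p : 'I_(n + (n - d)) -> R) (i : nat) : R := coord p (n + i).

(* the knot list (x_{i+1}, ..., x_{i+d+1}) *)
Definition window (n d : nat) (p : 'I_(n + (n - d)) -> R) (i : nat) : seq R :=
  [seq xs p (i + k) | k <- iota 0 d.+1].

Definition hcomp (j : nat) (v : seq R) : R :=
  \sum_(e : {ffun 'I_(size v) -> 'I_j.+1} | (\sum_(k < size v) (e k : nat))%N == j)
     \prod_(k < size v) v`_k ^+ e k.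

Definition moment (n d : nat) (p : 'I_(n + (n - d)) -> R) (j : nat) : R :=
  ('C(j + d, d))%:R^-1 * \sum_(i < n - d) als p i * hcomp j (window p i).

Definition prony (n d : nat) (p : 'I_(n + (n - d)) -> R) : seq R :=
  [seq moment p j | j <- iota 0 (2 * n - d)].

Definition cnorm (d : nat) (M : seq R) (k : nat) : R :=
  if (k < d)%N then 0 else ('C(k, d))%:R * M`_(k - d).

Definition hankel (n d : nat) (M : seq R) : 'M[R]_(n, n.+1) :=
  \matrix_(i < n, j < n.+1) cnorm d M (i + j).

Definition kerpoly (n : nat) (u : 'cV[R]_n.+1) : {poly R} :=
  \poly_(k < n.+1) u (inord k) 0.

Definition Amat (n d : nat) (p : 'I_(n + (n - d)) -> R) : 'M[R]_(n - d) :=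
  \matrix_(r < n - d, i < n - d) hcomp r (window p i).

Definition bvec (n d : nat) (M : seq R) : 'cV[R]_(n - d) :=
  \col_(r < n - d) (('C(r + d, d))%:R * M`_r).

Definition alcol (n d : nat) (p : 'I_(n + (n - d)) -> R) : 'cV[R]_(n - d) :=
  \col_(i < n - d) als p i.

(* iterated Lebesgue integral over the simplex
   { (t_1,...,t_k) : t_i >= 0, sum t_i <= s } of the indicator of A at
   acc + sum_i t_i v_i + (s - sum_i t_i) v_last *)
Fixpoint simplex_int (A : set R) (vs : seq R) (s acc : R) {struct vs} : \bar R :=
  match vs with
  | [::] => 0%E
  | [:: v] => ((\1_A (acc + s * v)) : R)%:E
  | v :: vs' =>
      (\int[@lebesgue_measure R]_(t in `[0%R, s]%classic) simplex_int A vs' (s - t) (acc + t * v))%E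
  end.

(* mu_V(A) for V = (v_1, ..., v_{d+1}): the law of sum_k lambda_k v_k with
   lambda uniform on the standard simplex, i.e. d! times Lebesgue measure
   in the coordinates (lambda_1, ..., lambda_d) *)
Definition simplex_spline (V : seq R) (A : set R) : R :=
  ((size V).-1)`!%:R * fine (simplex_int A V 1 0).

Definition spline_comb (n d : nat) (p : 'I_(n + (n - d)) -> R)
    (beta : 'I_(n - d) -> R) (A : set R) : R :=
  \sum_(i < n - d) beta i * simplex_spline (window p i) A.

Definition in_spline_cone (n d : nat) (p : 'I_(n + (n - d)) -> R)
    (nu : set R -> R) : Prop :=
  exists beta : 'I_(n - d) -> R, (forall i, 0 <= beta i) /\
    forall A : set R, measurable A -> nu A = spline_comb p beta A.

Definition good_domain (n d : nat) : set ('I_(n + (n - d)) -> R) :=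
  [set p | (forall k, (k.+1 < n)%N -> xs p k < xs p k.+1) /\
           (forall i, (i < n - d)%N -> als p i != 0)].

End HigherProny.

(* Main.v *)
Require Import Defs.
From HB Require Import structures.
From mathcomp Require Import all_boot all_order all_algebra.
From mathcomp Require Import all_classical all_reals all_analysis.
From mathcomp Require Import ring lra zify.
From mathcomp Require mpoly.
Import (canonicals, coercions, hints) mpoly.
Import Order.TTheory GRing.Theory Num.Theory.
Local Open Scope classical_set_scope.
Local Open Scope ring_scope.
Set Implicit Arguments. Unset Strict Implicit. Unset Printing Implicit Defensive.

Section PartA.
Variable R : realType.

Fixpoint hh (r : nat) (v : seq R) : R :=
  match r with
  | 0 => 1
  | r'.+1 => (fix g (v : seq R) := match v with
                | [::] => 0 | a :: w => a * hh r' (a :: w) + g w end) v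
  end.

Lemma hhS r a w : hh r.+1 (a :: w) = a * hh r (a :: w) + hh r.+1 w.
Proof. by []. Qed.

Definition Tp (B : nat) (c : R) : {poly R} := \sum_(i < B) (c ^+ i) *: 'X^i.

Lemma TpS B c : Tp B.+1 c = 1 + 'X * (c *: Tp B c).
Proof.
rewrite /Tp big_ord_recl /= expr0 scale1r; congr (_ + _).
rewrite scaler_sumr mulr_sumr; apply: eq_bigr => i _.
by rewrite /bump /= add1n scalerA -exprS -scalerAr -exprS.
Qed.

Lemma coef_prodT r (s : seq (R * nat)) :
  all (fun q => r < q.2)%N s ->
  (\prod_(q <- s) Tp q.2 q.1)`_r = hh r (map fst s).
Proof.
move: s; elim: r => [|r IH] s.
  elim: s => [|[c B] s IHs] /=; first by rewrite big_nil coefC.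
  case/andP => hB hs; rewrite big_cons coef0M IHs //.
  case: B hB => // B _; rewrite TpS coefD coef1 coefXM /= mulr1 addr0 //.
elim: s => [|[c B] s IHs] /=; first by rewrite big_nil coefC.
case/andP => hB hs; rewrite big_cons /=.
case: B hB => // B hB; rewrite TpS mulrDl mul1r coefD -mulrA coefXM /=.
rewrite -scalerAl coefZ addrC; congr (_ + _); last exact: IHs hs.
congr (_ * _).
have := IH ((c, B) :: s); rewrite big_cons /=; apply.
rewrite /= -ltnS hB /=; apply/allP => q /(allP hs); exact: ltnW.
Qed.

Lemma hcomp_hh j v : hcomp j v = hh j v.
Proof.
have -> : hh j v = (\prod_(q <- [seq (c, j.+1) | c <- v]) Tp q.2 q.1)`_j.
  rewrite coef_prodT; first by rewrite -map_comp map_id.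
  by apply/allP => q /mapP [c _ ->].
rewrite big_map (big_nth 0) big_mkord /Tp /= bigA_distr_bigA /= coef_sum.
rewrite /hcomp big_mkcond /=; apply: eq_bigr => e _.
have -> : \prod_(i < size v) (v`_i ^+ e i *: 'X^(e i)) =
    (\prod_(i < size v) v`_i ^+ e i) *: 'X^(\sum_(i < size v) (e i : nat)).
  rewrite -prodrXr; elim/big_rec3: _ => [|i a b c _ ->]; first by rewrite scale1r.
  by rewrite -!mul_polyC rmorphM /= mulrACA.
rewrite coefZ coefXn eq_sym; by case: eqP => _; rewrite ?mulr1 ?mulr0.
Qed.

Definition DD (v : seq R) (k : nat) : R :=
  \sum_(a <- v) a ^+ k / \prod_(b <- v | b != a) (a - b).

Lemma prod_notin (a : R) w (F : R -> R) : a \notin w ->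
  \prod_(b <- w | b != a) F b = \prod_(b <- w) F b.
Proof.
move=> aw; rewrite big_seq_cond [RHS]big_seq; apply: eq_bigl => b.
by case bw: (b \in w) => //=; apply/negP => /eqP eba; rewrite -eba bw in aw.
Qed.

Lemma prod_diff_neq0 (a : R) w : \prod_(b <- w | b != a) (a - b) != 0.
Proof.
rewrite prodf_seq_neq0; apply/allP => b _ /=; apply/implyP => hb.
by rewrite subr_eq0 eq_sym.
Qed.

Lemma DD3 a b w k : a != b -> a \notin w -> b \notin w -> uniq w ->
  (a - b) * DD [:: a, b & w] k = DD (a :: w) k - DD (b :: w) k.
Proof.
move=> ab aw bw uw; rewrite /DD !big_cons !eqxx /= eq_sym ab /=.
rewrite !prod_notin // mulrDr mulrDr.
have hab : a - b != 0 by rewrite subr_eq0.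
have hba : b - a != 0 by rewrite subr_eq0 eq_sym.
have Pa : \prod_(c <- w) (a - c) != 0.
  by rewrite -(prod_notin _ aw) prod_diff_neq0.
have Pb : \prod_(c <- w) (b - c) != 0.
  by rewrite -(prod_notin _ bw) prod_diff_neq0.
rewrite mulr_sumr.
have -> : \sum_(i <- w) (a - b) * (i ^+ k / \prod_(b0 <- [:: a, b & w] | b0 != i) (i - b0))
   = \sum_(i <- w) (i ^+ k / \prod_(b0 <- a :: w | b0 != i) (i - b0))
     - \sum_(i <- w) (i ^+ k / \prod_(b0 <- b :: w | b0 != i) (i - b0)).
  rewrite -sumrB big_seq [RHS]big_seq; apply: eq_bigr => c cw.
  have ca : a != c by apply/eqP => e; rewrite e cw in aw.
  have cb : b != c by apply/eqP => e; rewrite e cw in bw.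
  rewrite !big_cons ca cb /=.
  have := prod_diff_neq0 c w; set P := \prod_(_ <- _ | _) _ => hP.
  have hca : c - a != 0 by rewrite subr_eq0 eq_sym.
  have hcb : c - b != 0 by rewrite subr_eq0 eq_sym.
  by field; rewrite hP hca hcb.
rewrite addrA [in RHS]addrC.
have e1 : (a - b) * (a ^+ k / ((a - b) * \prod_(c <- w) (a - c))) = a ^+ k / \prod_(c <- w) (a - c).
  by field; rewrite Pa hab.
have e2 : (a - b) * (b ^+ k / ((b - a) * \prod_(c <- w) (b - c))) = - (b ^+ k / \prod_(c <- w) (b - c)).
  by field; rewrite Pb hba.
rewrite e1 e2; set S1 := \sum_(_ <- _) _; set S2 := \sum_(_ <- _) _.
rewrite opprD; ring.
Qed.

Lemma hh_single r a : hh r [:: a] = a ^+ r.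
Proof. by elim: r => // r IH; rewrite hhS IH addr0 exprS. Qed.

Lemma hh_diff r a b w :
  hh r.+1 (a :: w) - hh r.+1 (b :: w) = (a - b) * hh r [:: a, b & w].
Proof.
elim: r => [|r IH]; first by rewrite !hhS /=; ring.
rewrite hhS [hh r.+2 (b :: w)]hhS [hh r.+1 [:: a, b & w]]hhS.
have e : hh r.+1 (a :: w) = hh r.+1 (b :: w) + (a - b) * hh r [:: a, b & w] by rewrite -IH; ring.
rewrite e; ring.
Qed.

Lemma DD_hh s v : size v = s.+1 -> uniq v -> forall k,
  DD v k = if (k < s)%N then 0 else hh (k - s) v.
Proof.
elim: s v => [|s IH] v.
  case: v => [|a [|]] //= _ _ k; rewrite /DD big_cons !big_nil.
  by rewrite big_cons !big_nil /= ?eqxx /= divr1 addr0 subn0 hh_single.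
case: v => [|a [|b w]] //= [sw] /andP [] /[!inE] /norP [ab aw] /andP [bw uw] k.
have Ia := IH (a :: w) ltac:(by rewrite /= sw) ltac:(by rewrite /= aw uw).
have Ib := IH (b :: w) ltac:(by rewrite /= sw) ltac:(by rewrite /= bw uw).
have hab : a - b != 0 by rewrite subr_eq0.
have -> : DD [:: a, b & w] k = (DD (a :: w) k - DD (b :: w) k) / (a - b).
  by rewrite -DD3 // [_ * DD _ _]mulrC mulfK.
rewrite Ia Ib; case: (ltnP k s) => hks.
  by rewrite ltnS ltnW // subrr mul0r.
case: (ltnP k s.+1) => hk.
  have ek : k = s by apply/eqP; rewrite eqn_leq hks andbT -ltnS.
  rewrite ek.
  by rewrite subnn /= subrr mul0r.
have -> : (k - s = (k - s.+1).+1)%N by rewrite subnS prednK // subn_gt0.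
by rewrite hh_diff mulrC mulKf.
Qed.

End PartA.

Section PartB.
Variable R : realType.
Variables (n d : nat).
Local Notation N := (n + (n - d))%N.
Implicit Types p : 'I_N -> R.

Definition Pd (a : R) (v : seq R) := \prod_(b <- v | b != a) (a - b).

Definition incr p := forall k, (k.+1 < n)%N -> xs p k < xs p k.+1.

Lemma incr_lt p : incr p -> forall k l, (k < l)%N -> (l < n)%N -> xs p k < xs p l.
Proof.
move=> hx k l; elim: l => // l IH; rewrite ltnS leq_eqVlt => /orP [/eqP -> | kl] hl.
  exact: hx.
exact: lt_trans (IH kl (ltnW hl)) (hx _ hl).
Qed.

Lemma incr_inj p : incr p -> forall k l, (k < n)%N -> (l < n)%N ->
  xs p k = xs p l -> k = l.
Proof.
move=> hx k l hk hl e; case: (ltngtP k l) => // h.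
  by have := incr_lt hx h hl; rewrite e ltxx.
by have := incr_lt hx h hk; rewrite e ltxx.
Qed.

Lemma size_window p i : size (window p i) = d.+1.
Proof. by rewrite size_map size_iota. Qed.

Lemma uniq_window p i : incr p -> (i < n - d)%N -> uniq (window p i).
Proof.
move=> hx hi; rewrite map_inj_in_uniq ?iota_uniq // => a b.
rewrite !mem_iota !add0n => /andP [_ ha] /andP [_ hb] /(incr_inj hx) h.
have : (i + a = i + b)%N by apply: h; lia.
lia.
Qed.

Lemma DD_window p i K : DD (window p i) K =
  \sum_(k < d.+1) xs p (i + k) ^+ K / Pd (xs p (i + k)) (window p i).
Proof.
rewrite /DD /Pd {1}/window big_map.
have -> : iota 0 d.+1 = index_iota 0 d.+1 by rewrite /index_iota subn0.
by rewrite big_mkord.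
Qed.

Lemma sum_shift (G : nat -> R) i : (i + d < n)%N ->
  \sum_(k < d.+1) G (i + k) = \sum_(l < n | (i <= l)%N && (l <= i + d)%N) G l.
Proof.
move=> h.
have h1 : (i + d.+1 <= n)%N by lia.
rewrite -(big_mkord (fun l => (i <= l)%N && (l <= i + d)%N)).
rewrite (@big_cat_nat _ _ _ (i + d.+1) 0 n _ _ (leq0n _) h1) /=.
rewrite [X in _ = _ + X]big_nat_cond [X in _ = _ + X]big1 ?addr0; last first.
  by move=> l /andP [/andP [h2 _] /andP [_ h3]]; lia.
rewrite (@big_cat_nat _ _ _ i 0 (i + d.+1) _ _ (leq0n _) (leq_addr _ _)) /=.
rewrite [X in _ = X + _]big_nat_cond [X in _ = X + _]big1 ?add0r; last first.
  by move=> l /andP [/andP [_ h2] /andP [h3 _]]; lia.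
rewrite big_nat_cond.
rewrite (eq_bigl (fun l : nat => (i <= l < i + d.+1)%N && true)); last first.
  by move=> l; rewrite andbT; apply/andb_idr => /andP [a b]; apply/andP; split => //; lia.
have e := @big_addn _ 0 +%R 0 (i + d.+1) i xpredT G; rewrite add0n in e.
rewrite -big_nat_cond e.
have -> : (i + d.+1 - i = d.+1)%N by lia.
by rewrite big_mkord; apply: eq_bigr => k _; rewrite addnC.
Qed.

Definition Wt p (g : 'I_(n - d) -> R) (l : nat) : R :=
  \sum_(i < n - d | (i <= l)%N && (l <= i + d)%N) g i / Pd (xs p l) (window p i).

Lemma sumDD_W p g K :
  \sum_(i < n - d) g i * DD (window p i) K = \sum_(l < n) Wt p g l * xs p l ^+ K.
Proof.
rewrite (eq_bigr (fun i : 'I_(n - d) => \sum_(l < n | (i <= l)%N && (l <= i + d)%N)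
   g i * (xs p l ^+ K / Pd (xs p l) (window p i)))); last first.
  move=> i _; rewrite DD_window mulr_sumr.
  have hi : (i + d < n)%N by have := ltn_ord i; lia.
  exact: (sum_shift (fun l => g i * (xs p l ^+ K / Pd (xs p l) (window p i))) hi).
under eq_bigr => i _ do rewrite big_mkcond.
rewrite exchange_big /=.
apply: eq_bigr => l _; rewrite /Wt mulr_suml [RHS]big_mkcond /=; apply: eq_bigr => i _.
by case: (_ && _); rewrite ?mul0r //; ring.
Qed.

Lemma vander_zero (x z : nat -> R) :
  (forall k l, (k < n)%N -> (l < n)%N -> x k = x l -> k = l) ->
  (forall K, (K < n)%N -> \sum_(l < n) z l * x l ^+ K = 0) ->
  forall l, (l < n)%N -> z l = 0.
Proof.
move=> xinj hz l0 hl0.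
pose s := [seq m <- iota 0 n | m != l0].
pose Q := \prod_(m <- s) ('X - (x m)%:P).
have sQ : (size Q <= n)%N.
  rewrite size_prod_XsubC size_filter.
  have := count_predC (pred1 l0) (iota 0 n).
  rewrite size_iota (count_uniq_mem _ (iota_uniq 0 n)) mem_iota add0n hl0 /=.
  move=> h; have h2 : (count (fun m => m != l0) (iota 0 n) + 1 = n)%N.
    exact: (etrans (addnC _ 1) h).
  by rewrite -[X in (_ < X)%N]h2 addn1; exact: leqnn.
have us : uniq s by rewrite filter_uniq ?iota_uniq.
have key : \sum_(K < n) Q`_K * (\sum_(l < n) z l * x l ^+ K) = 0.
  by rewrite big1 // => K _; rewrite hz // mulr0.
rewrite (eq_bigr (fun K : 'I_n => \sum_(l < n) z l * (Q`_K * x l ^+ K))) in key;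
  last by move=> K _; rewrite mulr_sumr; apply: eq_bigr => l _; ring.
rewrite exchange_big /= in key.
rewrite (eq_bigr (fun l : 'I_n => z l * Q.[x l])) in key; last first.
  by move=> l _; rewrite -mulr_sumr (horner_coef_wide _ sQ).
rewrite (bigD1 (Ordinal hl0)) //= big1 ?addr0 in key; last first.
  move=> l hl; rewrite horner_prod (bigD1_seq (l : nat)) //= ?hornerXsubC ?subrr ?mul0r ?mulr0 //.
  rewrite mem_filter mem_iota /= add0n ltn_ord andbT; apply/eqP => e.
  by move: hl; rewrite -(inj_eq val_inj) /= e eqxx.
move/eqP: key; rewrite mulf_eq0 => /orP [/eqP //|].
rewrite horner_prod prodf_seq_eq0 => /hasP [m]; rewrite mem_filter mem_iota add0n => /andP [ml0 /andP [_ hm]].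
rewrite /= hornerXsubC subr_eq0 => /eqP /xinj e; have := e hl0 hm; move/eqP: ml0; congruence.
Qed.

End PartB.

Section PartC.
Variable R : realType.
Variables (n d : nat).
Hypothesis hn : (d + 1 <= n)%N.
Local Notation N := (n + (n - d))%N.
Implicit Types p : 'I_N -> R.

Local Notation incr := (@incr R n d).
Local Notation Wt := (@Wt R n d).

Definition alg p : 'I_(n - d) -> R := fun i => als p i.

Lemma DD_low p i K : incr p -> (i < n - d)%N -> (K < d)%N -> DD (window p i) K = 0.
Proof.
move=> hx hi hK; rewrite (@DD_hh _ d) ?size_window ?uniq_window //.
by rewrite hK.
Qed.

Lemma DD_high p i r : incr p -> (i < n - d)%N -> DD (window p i) (r + d) = hcomp r (window p i).
Proof.
move=> hx hi; rewrite (@DD_hh _ d) ?size_window ?uniq_window //.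
by rewrite ltnNge leq_addl /= addnK hcomp_hh.
Qed.

Lemma size_prony p : size (prony p) = (2 * n - d)%N.
Proof. by rewrite size_map size_iota. Qed.

Lemma nth_prony p j : (j < 2 * n - d)%N -> (prony p)`_j = moment p j.
Proof. by move=> hj; rewrite (nth_map 0%N) ?size_iota // nth_iota. Qed.

Lemma binr_neq0 a b : (b <= a)%N -> ('C(a, b)%:R : R) != 0.
Proof. by move=> h; rewrite pnatr_eq0 -lt0n bin_gt0. Qed.

Lemma cnorm_prony p k : incr p -> (k < 2 * n)%N ->
  cnorm d (prony p) k = \sum_(i < n - d) alg p i * DD (window p i) k.
Proof.
move=> hx hk; rewrite /cnorm; case: ltnP => hkd.
  by rewrite big1 // => i _; rewrite DD_low ?mulr0.
rewrite nth_prony; last by lia.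
rewrite /moment subnK // mulrA mulfV ?binr_neq0 // mul1r.
apply: eq_bigr => i _; rewrite /alg -DD_high ?subnK //.
Qed.

Lemma cnorm_W p k : incr p -> (k < 2 * n)%N ->
  cnorm d (prony p) k = \sum_(l < n) Wt p (alg p) l * xs p l ^+ k.
Proof. by move=> hx hk; rewrite cnorm_prony // sumDD_W. Qed.

Lemma bvec_prony p : incr p -> bvec n d (prony p) = Amat p *m alcol p.
Proof.
move=> hx; apply/matrixP => r j; rewrite !mxE nth_prony; last by have := ltn_ord r; lia.
rewrite /moment mulrA mulfV ?binr_neq0 ?leq_addl // mul1r.
apply: eq_bigr => i _; rewrite !mxE mulrC.
by [].
Qed.

Lemma W_zero p (g : 'I_(n - d) -> R) : incr p -> (forall l, (l < n)%N -> Wt p g l = 0) -> forall i, g i = 0.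
Proof.
move=> hx hW.
suff H : forall m (i : 'I_(n - d)), (i : nat) = m -> g i = 0 by move=> i; exact: H _ _ erefl.
elim/ltn_ind => m IH i him.
have hin : (i < n)%N by have := ltn_ord i; lia.
have := hW i hin; rewrite /Wt (bigD1 i) /=; last by rewrite leqnn leq_addr.
rewrite big1 ?addr0; last first.
  move=> j /andP [/andP [hji _] hij].
  have hj : (j < i)%N by rewrite ltn_neqAle hji andbT; apply: contra hij => /eqP e; apply/eqP/val_inj.
  by rewrite (IH j) ?mul0r // -him.
move/eqP; rewrite mulf_eq0 invr_eq0 => /orP [/eqP //|].
by rewrite /Pd (negbTE (prod_diff_neq0 _ _)).
Qed.

Lemma A_inj p (beta : 'cV[R]_(n - d)) : incr p -> Amat p *m beta = 0 -> beta = 0.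
Proof.
move=> hx hA.
pose g := fun i : 'I_(n - d) => beta i 0.
have hK : forall K, (K < n)%N -> \sum_(l < n) Wt p g l * xs p l ^+ K = 0.
  move=> K hK; rewrite -sumDD_W; case: (ltnP K d) => hKd.
    by rewrite big1 // => i _; rewrite DD_low ?mulr0.
  have hr : (K - d < n - d)%N by lia.
  transitivity ((Amat p *m beta) (Ordinal hr) 0); last by rewrite hA mxE.
  by rewrite mxE; apply: eq_bigr => i _; rewrite mxE -DD_high // subnK // mulrC.
have := vander_zero (fun k l hk hl => @incr_inj R n d p hx k l hk hl) hK.
move=> hW; have := W_zero hx hW => hg.
by apply/matrixP => i j; rewrite ord1 mxE; exact: hg.
Qed.

Lemma claim3 p (beta : 'cV[R]_(n - d)) : incr p ->
  (Amat p *m beta = bvec n d (prony p) <-> beta = alcol p).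
Proof.
move=> hx; rewrite bvec_prony //; split => [h|->] //.
apply/eqP; rewrite -subr_eq0; apply/eqP; apply: (A_inj hx).
by rewrite mulmxBr h subrr.
Qed.

End PartC.

Section PartD.
Variable R : realType.
Variables (n d : nat).
Hypothesis hn : (d + 1 <= n)%N.
Local Notation N := (n + (n - d))%N.
Implicit Types p : 'I_N -> R.

Local Notation incr := (@incr R n d).
Local Notation Wt := (@Wt R n d).
Local Notation alg := (@alg R n d).

Definition Vp (v : 'rV[R]_n) : {poly R} := \sum_(i < n) v 0 i *: 'X^i.

Lemma hornerVp v t : (Vp v).[t] = \sum_(i < n) v 0 i * t ^+ i.
Proof.
rewrite /Vp horner_sum; apply: eq_bigr => i _.
by rewrite hornerZ hornerXn.
Qed.

Lemma size_Vp v : (size (Vp v) <= n)%N.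
Proof.
rewrite /Vp; apply: leq_trans (size_sum _ _ _) _; apply/bigmax_leqP => i _.
by apply: leq_trans (size_scale_leq _ _) _; rewrite size_polyXn.
Qed.

Lemma coef_Vp v (k : 'I_n) : (Vp v)`_k = v 0 k.
Proof.
rewrite /Vp coef_sum (bigD1 k) //= coefZ coefXn eqxx mulr1 big1 ?addr0 //.
move=> i hi; rewrite coefZ coefXn; case: eqP => [e|]; last by rewrite mulr0.
by move: hi; rewrite -(inj_eq val_inj) /= e eqxx.
Qed.

Lemma HK p (u : 'cV[R]_n.+1) (i : 'I_n) : incr p ->
  (hankel n d (prony p) *m u) i 0 =
  \sum_(l < n) (Wt p (alg p) l * (kerpoly u).[xs p l]) * xs p l ^+ i.
Proof.
move=> hx; rewrite mxE.
under eq_bigr => j _.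
  rewrite mxE (@cnorm_W _ n d) //; last by have := ltn_ord i; have := ltn_ord j; lia.
  rewrite mulr_suml; over.
rewrite exchange_big /=; apply: eq_bigr => l _.
rewrite /kerpoly horner_poly mulr_sumr mulr_suml; apply: eq_bigr => j _.
by rewrite inord_val exprD; ring.
Qed.

Lemma HKrow p (v : 'rV[R]_n) (j : 'I_n.+1) : incr p ->
  (v *m hankel n d (prony p)) 0 j =
  \sum_(l < n) (Wt p (alg p) l * (Vp v).[xs p l]) * xs p l ^+ j.
Proof.
move=> hx; rewrite mxE.
under eq_bigr => i _.
  rewrite mxE (@cnorm_W _ n d) //; last by have := ltn_ord i; have := ltn_ord j; lia.
  rewrite mulr_sumr; over.
rewrite exchange_big /=; apply: eq_bigr => l _.
rewrite hornerVp mulr_sumr mulr_suml; apply: eq_bigr => i _.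
by rewrite exprD; ring.
Qed.

Definition wnz p := forall l, (l < n)%N -> Wt p (alg p) l != 0.

Lemma ker_roots p (u : 'cV[R]_n.+1) : incr p -> wnz p ->
  hankel n d (prony p) *m u = 0 -> forall l, (l < n)%N -> (kerpoly u).[xs p l] = 0.
Proof.
move=> hx hw hu.
have hz : forall K, (K < n)%N ->
    \sum_(l < n) (Wt p (alg p) l * (kerpoly u).[xs p l]) * xs p l ^+ K = 0.
  by move=> K hK; have := HK u (Ordinal hK) hx; rewrite hu mxE => <-.
move=> l hl; have := @vander_zero R n (xs p) (fun l => Wt p (alg p) l * (kerpoly u).[xs p l]) (fun k l hk hl => @incr_inj R n d p hx k l hk hl) hz l hl.
by move/eqP; rewrite mulf_eq0 (negbTE (hw l hl)) => /eqP.
Qed.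

Lemma kerpoly_neq0 (u : 'cV[R]_n.+1) : u != 0 -> kerpoly u != 0.
Proof.
apply: contraNneq => hk; apply/eqP/matrixP => j k; rewrite ord1 !mxE.
have := congr1 (fun q : {poly R} => q`_j) hk; rewrite coef_poly ltn_ord inord_val coef0.
by [].
Qed.

Lemma uniq_xs p : incr p -> uniq [seq xs p k | k <- iota 0 n].
Proof.
move=> hx; rewrite map_inj_in_uniq ?iota_uniq // => a b.
rewrite !mem_iota !add0n => /andP [_ ha] /andP [_ hb]; exact: (incr_inj hx).
Qed.

Lemma claim2 p (u : 'cV[R]_n.+1) : incr p -> wnz p ->
  hankel n d (prony p) *m u = 0 -> u != 0 ->
  forall t : R, root (kerpoly u) t <-> exists2 k, (k < n)%N & t = xs p k.
Proof.
move=> hx hw hu un0 t; split; last first.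
  by move=> [k hk ->]; apply/eqP; exact: ker_roots.
move=> ht; case: (boolP (has (fun k => t == xs p k) (iota 0 n))).
  by case/hasP => k; rewrite mem_iota add0n => /andP [_ hk] /eqP ->; exists k.
move=> hno; exfalso.
have := @max_poly_roots _ (kerpoly u) (t :: [seq xs p k | k <- iota 0 n]) (kerpoly_neq0 un0).
have -> : all (root (kerpoly u)) (t :: [seq xs p k | k <- iota 0 n]).
  rewrite /= ht /=; apply/allP => y /mapP [k]; rewrite mem_iota add0n => /andP [_ hk] ->.
  by apply/eqP; exact: ker_roots.
have -> : uniq (t :: [seq xs p k | k <- iota 0 n]).
  rewrite /= uniq_xs // andbT; apply/mapP => [[k hk e]].
  by move/hasP: hno; apply; exists k => //; apply/eqP.
move=> /(_ erefl erefl); rewrite /= size_map size_iota.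
by have := size_poly n.+1 (fun k => u (inord k) 0); rewrite /kerpoly => h1 h2; have := leq_trans h2 h1; rewrite ltnn.
Qed.

Lemma claim1 p : incr p -> wnz p -> \rank (kermx (hankel n d (prony p))^T) = 1%N.
Proof.
move=> hx hw.
have rf : row_free (hankel n d (prony p)).
  apply: inj_row_free => v hv.
  have hz : forall K, (K < n)%N ->
      \sum_(l < n) (Wt p (alg p) l * (Vp v).[xs p l]) * xs p l ^+ K = 0.
    by move=> K hK; have := HKrow v (Ordinal (leqW hK)) hx; rewrite hv mxE => <-.
  have hr : forall l, (l < n)%N -> (Vp v).[xs p l] = 0.
    move=> l hl; have := @vander_zero R n (xs p) (fun l => Wt p (alg p) l * (Vp v).[xs p l]) (fun k l hk hl => @incr_inj R n d p hx k l hk hl) hz l hl.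
    by move/eqP; rewrite mulf_eq0 (negbTE (hw l hl)) => /eqP.
  have V0 : Vp v = 0.
    apply/eqP; apply: contraT => hV.
    have := @max_poly_roots _ (Vp v) [seq xs p k | k <- iota 0 n] hV.
    have -> : all (root (Vp v)) [seq xs p k | k <- iota 0 n].
      apply/allP => y /mapP [k]; rewrite mem_iota add0n => /andP [_ hk] ->.
      by apply/eqP; exact: hr.
    rewrite uniq_xs // size_map size_iota => /(_ erefl erefl) h.
    by have := leq_trans h (size_Vp v); rewrite ltnn.
  apply/matrixP => i k; rewrite ord1 mxE -coef_Vp V0 coef0.
  by [].
by rewrite mxrank_ker mxrank_tr (eqP rf) subSnn.
Qed.

Definition Qp p : {poly R} := \prod_(k <- iota 0 n) ('X - (xs p k)%:P).
Definition uQ p : 'cV[R]_n.+1 := \col_(j < n.+1) (Qp p)`_j.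

Lemma size_Qp p : size (Qp p) = n.+1.
Proof. by rewrite /Qp size_prod_XsubC size_iota. Qed.

Lemma kerpoly_uQ p : kerpoly (uQ p) = Qp p.
Proof.
apply/polyP => k; rewrite coef_poly; case: ltnP => hk.
  by rewrite mxE /= inordK.
by rewrite nth_default // size_Qp.
Qed.

Lemma Qp_root p l : (l < n)%N -> (Qp p).[xs p l] = 0.
Proof.
move=> hl; rewrite /Qp horner_prod (bigD1_seq l) ?iota_uniq //=.
  by rewrite hornerXsubC subrr mul0r.
by rewrite mem_iota add0n hl.
Qed.

Lemma uQ_ker p : incr p -> hankel n d (prony p) *m uQ p = 0.
Proof.
move=> hx; apply/matrixP => i j; rewrite ord1 HK // mxE big1 // => l _.
by rewrite kerpoly_uQ Qp_root // mulr0 mul0r.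
Qed.

Lemma uQ_neq0 p : uQ p != 0.
Proof.
apply/eqP => e; have := kerpoly_uQ p; rewrite e => h.
have : Qp p != 0 by rewrite -size_poly_eq0 size_Qp.
rewrite -h; move/eqP; apply; apply/polyP => k; rewrite coef_poly coef0.
by case: ifP => // _; rewrite mxE.
Qed.

End PartD.

Section PartE.
Variable R : realType.

Lemma poly_all_roots (q : {poly R}) : (forall t, q.[t] = 0) -> q = 0.
Proof.
move=> h; apply/eqP; apply: contraT => hq.
have := @max_poly_roots _ q [seq i%:R | i <- iota 0 (size q)] hq.
have -> : all (root q) [seq i%:R | i <- iota 0 (size q)].
  by apply/allP => y _; apply/eqP; exact: h.
rewrite map_inj_uniq ?iota_uniq; last by move=> a b /eqP; rewrite eqr_nat => /eqP.
by rewrite size_map size_iota ltnn => /(_ erefl erefl).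
Qed.

Variable N : nat.
Local Notation MP := (mpoly.mpoly N R).

Lemma horner_mmap (h : 'I_N -> {poly R}) (f : MP) (t : R) :
  (mpoly.mmap (fun c : R => c%:P) h f).[t] = mpoly.meval (fun i => (h i).[t]) f.
Proof.
rewrite /mpoly.mmap mpoly.mevalE horner_sum; apply: eq_bigr => m _.
rewrite hornerM hornerC /mpoly.mmap1 horner_prod; congr (_ * _).
by apply: eq_bigr => i _; rewrite horner_exp.
Qed.

Lemma line_lemma (W f : MP) (z : 'I_N -> R) : mpoly.meval z W != 0 ->
  (forall p, mpoly.meval p (f * W) = 0) -> forall q, mpoly.meval q f = 0.
Proof.
move=> hz hfW q.
pose h := fun i => (q i)%:P + (z i - q i) *: 'X : {poly R}.
pose F := mpoly.mmap (fun c : R => c%:P) h f.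
pose G := mpoly.mmap (fun c : R => c%:P) h W.
have hFG : F * G = 0.
  apply: poly_all_roots => t; rewrite hornerM !horner_mmap -mpoly.mevalM.
  exact: hfW.
have hG : G != 0.
  apply/eqP => e; move: hz; rewrite (_ : z = fun i => (h i).[1]).
    by rewrite -horner_mmap -/G e horner0 eqxx.
  by apply: funext => i; rewrite /h hornerD hornerC hornerZ hornerX mulr1 addrC subrK.
have hF : F = 0 by move/eqP: hFG; rewrite mulf_eq0 (negbTE hG) orbF => /eqP.
have := horner_mmap h f 0; rewrite -/F hF horner0 => e.
rewrite e; apply: mpoly.meval_eq => i.
by rewrite /h hornerD hornerC hornerZ hornerX mulr0 addr0.
Qed.

Lemma dense_from (I : eqType) (s : seq I) (W : I -> MP) :
  (forall i, i \in s -> exists z, mpoly.meval z (W i) != 0) ->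
  forall f : MP, (forall p, mpoly.meval p (\prod_(i <- s) W i) != 0 -> mpoly.meval p f = 0) ->
  forall p, mpoly.meval p f = 0.
Proof.
elim: s => [|a s IH] hW f hf.
  by move=> p; apply: hf; rewrite big_nil mpoly.meval1 oner_neq0.
have hfa : forall p, mpoly.meval p (f * W a) = 0.
  apply: IH.
    by move=> i hi; apply: hW; rewrite inE hi orbT.
  move=> p hp; rewrite mpoly.mevalM.
  case: (eqVneq (mpoly.meval p (W a)) 0) => [->|ha]; first by rewrite mulr0.
  by rewrite hf ?mul0r // big_cons mpoly.mevalM mulf_neq0.
have [z hz] := hW a (mem_head a s).
exact: line_lemma hz hfa.
Qed.

End PartE.

Section PartE2.
Variable R : realType.
Variables (n d : nat).
Hypothesis hn : (d + 1 <= n)%N.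
Local Notation N := (n + (n - d))%N.
Local Notation MP := (mpoly.mpoly N R).
Implicit Types p : 'I_N -> R.
Local Notation incr := (@incr R n d).
Local Notation Wt := (@Wt R n d).
Local Notation alg := (@alg R n d).

Definition mx (k : nat) : MP :=
  if insub k is Some i then @mpoly.mpolyX N R (mpoly.mnm1 i) else 0.

Lemma meval_mx p k : mpoly.meval p (mx k) = Defs.coord p k.
Proof.
rewrite /mx /Defs.coord; case: insub => [i|]; last exact: mpoly.meval0.
exact: mpoly.mevalXU.
Qed.

Lemma meval_prod p (I : Type) (s : seq I) (P : pred I) (F : I -> MP) :
  mpoly.meval p (\prod_(i <- s | P i) F i) = \prod_(i <- s | P i) mpoly.meval p (F i).
Proof. exact: (big_morph _ (mpoly.mevalM p) (mpoly.meval1 p)). Qed.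

Lemma meval_sum p (I : Type) (s : seq I) (P : pred I) (F : I -> MP) :
  mpoly.meval p (\sum_(i <- s | P i) F i) = \sum_(i <- s | P i) mpoly.meval p (F i).
Proof. exact: (big_morph _ (mpoly.mevalD p) (mpoly.meval0 p)). Qed.

Definition DenMp (i l : nat) : MP :=
  \prod_(k < d.+1 | (i + k != l)%N) (mx l - mx (i + k)).

Lemma meval_Den p (i l : nat) : incr p -> (i < n - d)%N -> (l < n)%N ->
  mpoly.meval p (DenMp i l) = Pd (xs p l) (window p i).
Proof.
move=> hx hi hl; rewrite /DenMp meval_prod /Pd /window big_map.
have -> : iota 0 d.+1 = index_iota 0 d.+1 by rewrite /index_iota subn0.
rewrite big_mkord; apply: eq_big => k.
  congr negb; apply/eqP/eqP => [-> //|e].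
  have hk : (i + k < n)%N by have := ltn_ord k; lia.
  exact: (incr_inj hx hk hl e).
by move=> _; rewrite mpoly.mevalB !meval_mx.
Qed.

Definition Wmp (l : nat) : MP :=
  \sum_(i < n - d | (i <= l <= i + d)%N)
     mx (n + i) * \prod_(j < n - d | (j <= l <= j + d)%N && (j != i)) DenMp j l.

Lemma meval_W p l : incr p -> (l < n)%N ->
  mpoly.meval p (Wmp l) = Wt p (alg p) l *
     \prod_(j < n - d | (j <= l <= j + d)%N) Pd (xs p l) (window p j).
Proof.
move=> hx hl; rewrite /Wmp meval_sum /Wt mulr_suml; apply: eq_bigr => i hi.
rewrite mpoly.mevalM meval_mx meval_prod (bigD1 i hi) /=.
rewrite (eq_bigr (fun j : 'I_(n - d) => Pd (xs p l) (window p j))); last first.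
  by move=> j _; rewrite meval_Den.
have hP : Pd (xs p l) (window p i) != 0 := prod_diff_neq0 _ _.
rewrite /alg /als; field.
exact: hP.
Qed.

Definition Pmp : MP := \prod_(l <- iota 0 n) Wmp l.

Lemma Pmp_wnz p : incr p -> mpoly.meval p Pmp != 0 -> wnz p.
Proof.
move=> hx; rewrite /Pmp meval_prod prodf_seq_neq0 => /allP h l hl.
have := h l; rewrite mem_iota add0n hl /= => /(_ isT).
by rewrite meval_W //; apply: contra => /eqP ->; rewrite mul0r.
Qed.

Lemma Wmp_witness l : l \in iota 0 n -> exists z, mpoly.meval z (Wmp l) != 0.
Proof.
rewrite mem_iota add0n => hl.
pose i0 := minn l (n - d).-1.
have hi0 : (i0 < n - d)%N by rewrite /i0; lia.
pose z := fun j : 'I_N => if (j < n)%N then (j : nat)%:R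
                          else ((((j : nat) - n)%N == i0)%:R : R).
have hzx : forall k, (k < n)%N -> Defs.coord z k = k%:R.
  move=> k hk; rewrite /Defs.coord; case: insubP => [j _ hj|hk'].
    by rewrite /z hj hk.
  by exfalso; move/negP: hk'; apply; lia.
have hza : forall i, (i < n - d)%N -> Defs.coord z (n + i) = (i == i0)%:R.
  move=> i hi; rewrite /Defs.coord; case: insubP => [j _ hj|hk'].
    by rewrite /z hj ltnNge leq_addr /= addKn.
  by exfalso; move/negP: hk'; apply; lia.
exists z; rewrite /Wmp meval_sum (bigD1 (Ordinal hi0)) /=; last by rewrite /=; apply/andP; split; rewrite /i0; lia.
rewrite [X in _ + X]big1 ?addr0; last first.
  move=> i /andP [_ hi]. rewrite mpoly.mevalM meval_mx hza //.
  have -> : (i == i0 :> nat) = false.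
    by apply/negbTE; move: hi; apply: contra => /eqP e; apply/eqP/val_inj.
  by rewrite mul0r.
rewrite mpoly.mevalM meval_mx hza // eqxx mul1r meval_prod prodf_seq_neq0.
apply/allP => j _; apply/implyP => _.
rewrite meval_prod prodf_seq_neq0; apply/allP => k _; apply/implyP => hk.
rewrite mpoly.mevalB !meval_mx hzx // hzx; last by have := ltn_ord j; have := ltn_ord k; lia.
by rewrite subr_eq0 eqr_nat eq_sym.
Qed.

End PartE2.

Section PartF.
Variable R : realType.
Local Notation mu := (@lebesgue_measure R).
Local Open Scope ereal_scope.

Lemma int_mono (D1 D2 : set R) (f1 f2 : R -> \bar R) :
  (forall x, D1 x -> 0 <= f1 x) -> (forall x, D2 x -> 0 <= f2 x) ->
  (forall x, D1 x -> D2 x /\ f1 x <= f2 x) ->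
  \int[mu]_(x in D1) f1 x <= \int[mu]_(x in D2) f2 x.
Proof.
move=> h1 h2 h12; rewrite !ge0_integralE //.
apply: le_ereal_sup => _ [h hh <-]; exists h => //= x.
apply: le_trans (hh x) _; rewrite /patch.
case: ifPn => [/set_mem /h12 [D2x le12]|_].
  by rewrite ifT // mem_set.
by case: ifPn => // /set_mem /h2.
Qed.

Lemma leb_itv (a b : R) : (a <= b)%R -> mu `[a, b]%classic = (b - a)%:E.
Proof.
move=> ab; rewrite lebesgue_measure_itv /= lte_fin.
case: ltP => [_ //|ba]; have -> : b = a by apply/eqP; rewrite eq_le ab ba.
by rewrite subrr.
Qed.

Lemma int_cst_itv (a b r : R) : (a <= b)%R ->
  \int[mu]_(x in `[a, b]%classic) (cst r%:E) x = (r * (b - a))%:E.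
Proof.
move=> ab; rewrite integral_cst; last exact: (measurable_itv `[a, b]).
have := lebesgue_measure_itv `[a, b]; move=> /= ->; rewrite lte_fin.
case: ltP => [_ //|ba]; have -> : b = a by apply/eqP; rewrite eq_le ab ba.
by rewrite subrr mulr0 mule0.
Qed.

Lemma si_cons (A : set R) (v w : R) ws (s acc : R) : simplex_int A [:: v, w & ws] s acc =
  \int[mu]_(t in `[0%R, s]%classic) simplex_int A (w :: ws) (s - t) (acc + t * v).
Proof. by []. Qed.

Lemma si_single (A : set R) (v s acc : R) : simplex_int A [:: v] s acc = ((\1_A (acc + s * v)) : R)%:E.
Proof. by []. Qed.

Lemma si_ge0 (A : set R) (vs : seq R) (s acc : R) : 0 <= simplex_int A vs s acc.
Proof.
elim: vs s acc => [//|v [|w ws] IH] s acc.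
  by rewrite si_single lee_fin indicE ler0n.
by rewrite si_cons; apply: integral_ge0 => t _; exact: IH.
Qed.

Lemma si_le1 (A : set R) (vs : seq R) (s acc : R) : (0 <= s <= 1)%R -> simplex_int A vs s acc <= 1.
Proof.
elim: vs s acc => [|v [|w ws] IH] s acc hs.
- by rewrite /= lee01.
- by rewrite si_single lee_fin indicE; case: (_ \in _); rewrite ?ler01.
rewrite si_cons; apply: (@le_trans _ _ (\int[mu]_(t in `[0%R, s]%classic) (cst 1%:E) t)).
  apply: int_mono; first by move=> t _; exact: si_ge0.
    by move=> t _; rewrite /= lee01.
  move=> t ht; split => //; apply: IH; move: ht hs; rewrite /= in_itv /= => /andP [t0 ts] /andP [s0 s1].
  by apply/andP; split; lra.
move: hs => /andP [s0 s1]; rewrite int_cst_itv // lee_fin; lra.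
Qed.

Lemma si_zero (c : R) (vs : seq R) : (forall v, v \in vs -> c <= v)%R ->
  forall s acc, (0 <= s)%R -> (c * (1 - s) <= acc)%R ->
  simplex_int `]-oo, c[%classic vs s acc = 0.
Proof.
elim: vs => [//|v [|w ws] IH] hv s acc hs hacc.
  rewrite si_single indicE mem_setE in_itv /=.
  have := hv v; rewrite inE eqxx => /(_ isT) cv.
  have : (c <= acc + s * v)%R by nra.
  by rewrite leNgt => /negbTE ->.
rewrite si_cons; apply: integral0_eq => t; rewrite /= in_itv /= => /andP [t0 ts].
apply: IH; first by move=> y hy; apply: hv; rewrite inE hy orbT.
  lra.
have := hv v; rewrite inE eqxx => /(_ isT) cv; nra.
Qed.

Lemma full_lb k : exists e : R, (0 < e)%R /\ forall vs, size vs = k.+1 ->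
  forall Mx c acc s : R, (0 < s)%R -> (forall v, v \in vs -> v <= Mx)%R ->
  (acc + s * Mx < c)%R -> (e * s ^+ k)%:E <= simplex_int `]-oo, c[%classic vs s acc.
Proof.
elim: k => [|k [e [e0 IH]]].
  exists 1%R; split => // [[|v [|]]] // _ Mx c acc s s0 hv hc.
  rewrite si_single indicE mem_setE in_itv /= expr0 mulr1 lee_fin.
  have := hv v; rewrite inE eqxx => /(_ isT) vM.
  have -> : (acc + s * v < c)%R by nra.
  by [].
exists (e / 2 ^+ k.+1)%R; split; first by rewrite divr_gt0 // exprn_gt0.
move=> [|v [|w ws]] // [hs] Mx c acc s s0 hv hc; rewrite si_cons.
apply: (@le_trans _ _ (\int[mu]_(t in `[0%R, (s / 2)%R]%classic) (cst (e * (s / 2) ^+ k)%:E) t)).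
  rewrite int_cst_itv; last by rewrite divr_ge0 // ltW.
  rewrite lee_fin subr0 expr_div_n !exprS le_eqVlt; apply/orP; left; apply/eqP.
  have h2 : (2 ^+ k != 0 :> R)%R by rewrite expf_neq0 // pnatr_eq0.
  by field.
apply: int_mono.
- move=> t _; have hs2 : (0 <= s / 2)%R by rewrite divr_ge0 // ltW.
  by rewrite /= lee_fin mulr_ge0 ?exprn_ge0 // ltW.
- by move=> t _; exact: si_ge0.
move=> t; rewrite /= !in_itv /= => /andP [t0 ts2]; split.
  by apply/andP; split => //; lra.
have hv0 : (v <= Mx)%R by apply: hv; rewrite inE eqxx.
have hst : (0 < s - t)%R by lra.
apply: (le_trans _ (IH (w :: ws) (f_equal S hs) Mx c (acc + t * v)%R (s - t)%R hst _ _)).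
- rewrite lee_fin ler_pM2l // lerXn2r //; rewrite ?nnegrE; lra.
- by move=> y hy; apply: hv; rewrite inE hy orbT.
- nra.
Qed.

Lemma le_sum_abs (l : seq R) (y : R) : y \in l -> (y <= \sum_(x <- l) `|x|)%R.
Proof.
elim: l => // a l IH; rewrite inE big_cons => /orP [/eqP -> | hy].
  by apply: le_trans (ler_norm a) _; rewrite lerDl sumr_ge0.
by apply: le_trans (IH hy) _; rewrite lerDr.
Qed.

Lemma pos1 (c v0 : R) (ws : seq R) (s acc : R) : (0 < s)%R -> (acc + s * v0 < c)%R ->
  0 < simplex_int `]-oo, c[%classic (v0 :: ws) s acc.
Proof.
case: ws => [|w ws] s0 hc.
  by rewrite si_single indicE mem_setE in_itv /= hc lte01.
have [e [e0 hlb]] := full_lb (size ws).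
pose Mx := (\sum_(y <- [:: v0, w & ws]) `|y|)%R.
have hM : forall y, y \in [:: v0, w & ws] -> (y <= Mx)%R by move=> y; exact: le_sum_abs.
have hv0 : (v0 <= Mx)%R by apply: hM; rewrite inE eqxx.
pose g := (c - (acc + s * v0))%R.
have g0 : (0 < g)%R by rewrite /g subr_gt0.
pose D := (2 * (Mx - v0 + 1))%R.
have D0 : (0 < D)%R by rewrite /D; lra.
pose del := Num.min (s / 2)%R (g / D)%R.
have := le_refl del; rewrite {2}/del le_min => /andP [d1 d2].
have dpos : (0 < del)%R by rewrite /del lt_min; apply/andP; split; [lra | exact: divr_gt0].
rewrite ler_pdivlMr // in d2.
have hk : (0 < e * (del / 2) ^+ size ws * (del / 2))%R.
  by rewrite !mulr_gt0 // exprn_gt0 //; lra.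
apply: (@lt_le_trans _ _ (\int[mu]_(t in `[(s - del)%R, (s - del / 2)%R]%classic)
   (cst (e * (del / 2) ^+ size ws)%:E) t)).
  rewrite int_cst_itv; last lra.
  rewrite lte_fin; have -> : (s - del / 2 - (s - del) = del / 2)%R by field.
  exact: hk.
rewrite si_cons; apply: int_mono.
- move=> t _; rewrite /= lee_fin mulr_ge0 ?exprn_ge0 //; lra.
- by move=> t _; exact: si_ge0.
move=> t; rewrite /= !in_itv /= => /andP [t1 t2]; split.
  by apply/andP; split; lra.
have hst : (0 < s - t)%R by lra.
apply: (le_trans _ (hlb (w :: ws) erefl Mx c (acc + t * v0)%R (s - t)%R hst _ _)).
- rewrite lee_fin ler_pM2l // lerXn2r //; rewrite ?nnegrE; lra.
- by move=> y hy; apply: hM; rewrite inE hy orbT.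
- have hMv : (0 <= Mx - v0)%R by lra.
  have : ((s - t) * (Mx - v0) <= del * (Mx - v0))%R by apply: ler_wpM2r => //; lra.
  rewrite /g /D in d2 *; nra.
Qed.


End PartF.

Section PartG.
Variable R : realType.
Variables (n d : nat).
Hypothesis hn : (d + 1 <= n)%N.
Local Notation N := (n + (n - d))%N.
Implicit Types p : 'I_N -> R.
Local Notation incr := (@incr R n d).

Lemma spline_zero p i (c : R) : (forall v, v \in window p i -> c <= v) ->
  simplex_spline (window p i) `]-oo, c[%classic = 0.
Proof.
move=> hv; rewrite /simplex_spline si_zero //; last by rewrite subrr mulr0.
by rewrite /= mulr0.
Qed.

Lemma spline_pos p i (c : R) : xs p i < c ->
  0 < simplex_spline (window p i) `]-oo, c[%classic.
Proof.
move=> hc; rewrite /simplex_spline /window /=.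
set ws := map _ (iota 1 d).
have h0 := @pos1 R c (xs p (i + 0)) ws 1 0 ltr01 ltac:(by rewrite add0r mul1r addn0).
have h1 := @si_le1 R `]-oo, c[%classic (xs p (i + 0) :: ws) 1 0 ltac:(by rewrite ler01 lexx).
apply: mulr_gt0; first by rewrite ltr0n fact_gt0.
apply: fine_gt0; rewrite h0 /=; exact: (le_lt_trans h1 (ltry _)).
Qed.

Lemma lin_indep p (g : 'I_(n - d) -> R) : incr p ->
  (forall A : set R, measurable A ->
     \sum_(i < n - d) g i * simplex_spline (window p i) A = 0) ->
  forall i, g i = 0.
Proof.
move=> hx hA.
suff H : forall m (i : 'I_(n - d)), (i : nat) = m -> g i = 0 by move=> i; exact: H _ _ erefl.
elim/ltn_ind => m IH i him.
pose c := if (i.+1 < n)%N then xs p i.+1 else xs p i + 1.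
have := hA `]-oo, c[%classic (measurable_itv _).
rewrite (bigD1 i) //= big1 ?addr0; last first.
  move=> j hj; case: (ltngtP j i) => hji.
  - by rewrite (IH j) ?mul0r // -him.
  - have hjn : (j < n - d)%N := ltn_ord j.
    have hin : (i.+1 < n)%N by lia.
    rewrite spline_zero ?mulr0 // => v /mapP [k]; rewrite mem_iota add0n => /andP [_ hk] ->.
    rewrite /c hin; have : (i.+1 <= j + k)%N by lia.
    rewrite leq_eqVlt => /orP [/eqP -> //| h].
    apply: ltW; apply: (incr_lt hx h); lia.
  - by move: hj; rewrite -(inj_eq val_inj) /= hji eqxx.
move/eqP; rewrite mulf_eq0 => /orP [/eqP //|].
have : xs p i < c.
  rewrite /c; case: ifP => h; first exact: hx.
  by rewrite ltrDl ltr01.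
by move/spline_pos/lt0r_neq0/negbTE ->.
Qed.

Lemma A_unit p : incr p -> Amat p \in unitmx.
Proof.
move=> hx; rewrite -unitmx_tr -row_free_unit; apply: inj_row_free => v hv.
have hA : Amat p *m v^T = 0 by rewrite -[Amat p]trmxK -trmx_mul hv trmx0.
by have := @A_inj R n d hn p v^T hx hA => /(congr1 trmx); rewrite trmxK trmx0.
Qed.

Lemma claim4 p : incr p ->
  (in_spline_cone p (spline_comb p (fun i => als p i)) <->
   forall r : 'I_(n - d), 0 <= (invmx (Amat p) *m bvec n d (prony p)) r 0).
Proof.
move=> hx; rewrite (bvec_prony hn) // mulKmx ?A_unit //.
split.
  move=> [beta [hb heq]] r; rewrite mxE.
  have := @lin_indep p (fun i => als p i - beta i) hx.
  have H : forall A : set R, measurable A ->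
      \sum_(i < n - d) (als p i - beta i) * simplex_spline (window p i) A = 0.
    move=> A mA; have := heq A mA; rewrite /spline_comb => e.
    under eq_bigr => i _ do rewrite mulrBl.
    by rewrite sumrB e subrr.
  move=> /(_ H r) /eqP; rewrite subr_eq0 => /eqP ->; exact: hb.
move=> h; exists (fun i => als p i); split => //.
by move=> i; have := h i; rewrite mxE.
Qed.

End PartG.

Lemma sorted_xs (R : realType) (n d : nat) (p : 'I_(n + (n - d)) -> R) :
  incr p -> sorted <%R [seq xs p k | k <- iota 0 n].
Proof.
move=> hx.
suff H : forall j m, (m + j <= n)%N -> sorted <%R [seq xs p k | k <- iota m j].
  by apply: H; rewrite add0n.
elim=> [//|j IH] m hmj /=.
case: j IH hmj => [//|j] IH hmj /=.
apply/andP; split; first by apply: hx; lia.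
by have := IH m.+1 ltac:(lia).
Qed.

Unset Implicit Arguments.

Theorem theorem2p14 (R : realType) (d n : nat) (hn : (d + 1 <= n)%N) :
  exists U : set ('I_(n + (n - d)) -> R),
    zariski_open U /\ zariski_dense U /\
    {in U `&` @good_domain R n d &, injective (@prony R n d)} /\
    forall p, (U `&` @good_domain R n d) p ->
      let M := prony p in
      [/\ \rank (kermx (hankel n d M)^T) = 1%N,
          (forall u : 'cV[R]_n.+1, hankel n d M *m u = 0 -> u != 0 ->
             forall t : R, root (kerpoly u) t <-> exists2 k, (k < n)%N & t = xs p k),
          (forall beta : 'cV[R]_(n - d),
             Amat p *m beta = bvec n d M <-> beta = alcol p) &
          (in_spline_cone p (spline_comb p (fun i => als p i)) <->
             forall r : 'I_(n - d), 0 <= (invmx (Amat p) *m bvec n d M) r 0)].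
Proof.
exists [set p | mpoly.meval p (@Pmp R n d) != 0].
split.
  exists 1%N, (fun=> @Pmp R n d); apply/seteqP; split => p /=.
    by move=> h i; apply/eqP; move/negP: h; rewrite negbK.
  by move=> h; rewrite (h ord0) eqxx.
split.
  move=> Z [k [f hZ]] hUZ; rewrite hZ; apply/seteqP; split => // v _ i.
  apply: (@dense_from R (n + (n - d)) nat (iota 0 n) (@Wmp R n d) _ (f i)).
    by move=> l hl; exact: Wmp_witness.
  by move=> p hp; have := hUZ p hp; rewrite hZ; apply.
split.
  move=> p1 p2 /set_mem [hU1 [hx1 _]] /set_mem [hU2 [hx2 _]] e.
  have hw1 := Pmp_wnz hn hx1 hU1.
  have hw2 := Pmp_wnz hn hx2 hU2.
  have key : forall pa pb : 'I_(n + (n - d)) -> R, incr pa -> incr pb -> wnz pb ->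
      prony pa = prony pb -> forall l, (l < n)%N -> xs pb l \in [seq xs pa k | k <- iota 0 n].
    move=> pa pb hxa hxb hwb eab l hl.
    have hk := uQ_ker hn hxa; rewrite eab in hk.
    have := ker_roots hn hxb hwb hk hl; rewrite kerpoly_uQ => /eqP hr.
    have : root (Qp pa) (xs pb l) by [].
    by rewrite /Qp -(big_map (xs pa) xpredT (fun a => 'X - a%:P)) root_prod_XsubC.
  have hS : [seq xs p1 k | k <- iota 0 n] = [seq xs p2 k | k <- iota 0 n].
    apply: lt_sorted_eq; [exact: sorted_xs | exact: sorted_xs |] => t.
    apply/idP/idP => /mapP [k]; rewrite mem_iota add0n => /andP [_ hk] ->.
      exact: key p2 p1 hx2 hx1 hw1 (esym e) k hk.
    exact: key p1 p2 hx1 hx2 hw2 e k hk.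
  have hxs : forall k, (k < n)%N -> xs p1 k = xs p2 k.
    move=> k hk; have := congr1 (fun s => nth 0 s k) hS.
    by rewrite /= !(nth_map 0%N) ?size_iota // nth_iota.
  have hwin : forall i, (i < n - d)%N -> window p1 i = window p2 i.
    move=> i hi; rewrite /window; apply/eq_in_map => k; rewrite mem_iota add0n => /andP [_ hk].
    by apply: hxs; lia.
  have hA : Amat p1 = Amat p2.
    by apply/matrixP => r i; rewrite !mxE hwin.
  have halc : alcol p1 = alcol p2.
    apply/(claim3 hn (alcol p1) hx2).
    by rewrite -hA -e (bvec_prony hn hx1).
  apply: funext => j.
  have cj : forall p : 'I_(n + (n - d)) -> R, p j = Defs.coord p j.
    by move=> p; rewrite /Defs.coord valK.
  case: (ltnP j n) => hj.
    by rewrite !cj; exact: hxs j hj.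
  have hi : (j - n < n - d)%N by have := ltn_ord j; lia.
  have := congr1 (fun M : 'cV[R]_(n - d) => M (Ordinal hi) 0) halc.
  by rewrite !mxE /als /= subnKC // -!cj.
move=> p [hU [hx _]] M; rewrite /M.
have hw := Pmp_wnz hn hx hU.
split.
- by have h1 := claim1 hn hx hw.
- by have h2 := claim2 hn hx hw.
- by move=> beta; have h3 := claim3 hn beta hx.
- by have h4 := claim4 hn hx.
Qed.
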